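(* Let $G$ be an abelian group and $\precsim$ a total quasi-order on $G$. Then $\precsim$ is compatible with $+$ (i.e. $(G,\precsim)$ satisfies $(Q_1)$ and $(Q_2)$ below) if and only if $G$ admits a subgroup $H$ satisfying: (1) $H$ is an initial segment of $(G,\precsim)$; (2) the restriction of $\precsim$ to $H$ makes $H$ an ordered abelian group (i.e. it is antisymmetric on $H$ and $x\precsim y\Rightarrow x+z\precsim y+z$ for all $x,y,z\in H$); (3) there exists a valuation $v$ on $G$ such that $v(h)>v(g)$ for all $h\in H$ and $g\in G\setminus H$, and such that for all $g,h\in G\setminus H$ we have $g\precsim h\Leftrightarrow v(g)\geq v(h)$.
   Context: A quasi-order is a reflexive transitive binary relation; it is total if any two elements are comparable. Write $a\sim b$ for $a\precsim b\wedge b\precsim a$. Compatibility axioms: $(Q_1)$ for all $x$, $x\sim 0\Rightarrow x=0$; $(Q_2)$ for all $x,y,z$, if $x\precsim y$ and $y\not\sim z$ then $x+z\precsim y+z$. A subset $S\subseteq G$ is an initial segment if $s\in S$ and $a\precsim s$ imply $a\in S$. A valuation on an abelian group $G$ is a map $v:G\to\Gamma\cup\{\infty\}$, where $\Gamma$ is a totally ordered set and $\gamma<\infty$ for all $\gamma\in\Gamma$, such that $v(g)=\infty\Leftrightarrow g=0$, $v(g+h)\geq\min(v(g),v(h))$, and $v(-g)=v(g)$ for all $g,h\in G$. *)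

(* Defs.v *)
From HB Require Import structures.
From mathcomp Require Import all_boot all_order all_algebra.
Set Implicit Arguments. Unset Strict Implicit. Unset Printing Implicit Defensive.
Import Order.TTheory GRing.Theory.
Local Open Scope ring_scope.

Section QO.
Variable G : zmodType.
Variable le : G -> G -> Prop.

Definition quasi_order := (forall x, le x x) /\ (forall x y z, le x y -> le y z -> le x z).
Definition total_rel := forall x y, le x y \/ le y x.
Definition sim (a b : G) := le a b /\ le b a.

Definition Q1 := forall x : G, sim x 0 -> x = 0.
Definition Q2 := forall x y z : G, le x y -> ~ sim y z -> le (x + z) (y + z).

Definition is_subgroup (H : G -> Prop) :=
  H 0 /\ forall x y, H x -> H y -> H (x - y).

Definition initial_segment (S : G -> Prop) :=
  forall s a, S s -> le a s -> S a.

Definition ordered_on (H : G -> Prop) :=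
  (forall x y, H x -> H y -> le x y -> le y x -> x = y) /\
  (forall x y z, H x -> H y -> H z -> le x y -> le (x + z) (y + z)).
End QO.

(* Gamma ∪ {∞} is modelled as option Gamma, None = ∞ (the top element). *)
Definition vle {d} {Gam : orderType d} (a b : option Gam) : bool :=
  match a, b with
  | _, None => true
  | None, Some _ => false
  | Some x, Some y => (x <= y)%O
  end.
Definition vlt {d} {Gam : orderType d} (a b : option Gam) : bool := ~~ vle b a.

Definition valuation (G : zmodType) {d} {Gam : orderType d} (v : G -> option Gam) :=
  (forall g, v g = None <-> g = 0) /\
  (forall g h, vle (v g) (v (g + h)) || vle (v h) (v (g + h))) /\
  (forall g, v (- g) = v g).

(* Main.v *)
From HB Require Import structures.
Require Import Defs.
From mathcomp Require Import all_boot all_order all_algebra.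
From Stdlib Require Import Classical ClassicalEpsilon FunctionalExtensionality PropExtensionality ClassicalDescription.
Set Implicit Arguments. Unset Strict Implicit. Unset Printing Implicit Defensive.
Import Order.TTheory GRing.Theory.
Local Open Scope ring_scope.

Definition pb (P : Prop) : bool := if excluded_middle_informative P then true else false.
Lemma pbP (P : Prop) : reflect P (pb P).
Proof. rewrite /pb; case: excluded_middle_informative => h; by constructor. Qed.

Definition rep (G : zmodType) (le : G -> G -> Prop) (x : G) : G :=
  epsilon (inhabits (0 : G)) (sim le x).

Lemma sim_sym (G : zmodType) (le : G -> G -> Prop) x y : sim le x y -> sim le y x.
Proof. by case. Qed.
Lemma sim_trans (G : zmodType) (le : G -> G -> Prop) (hqo : quasi_order le) x y z :
  sim le x y -> sim le y z -> sim le x z.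
Proof. case: hqo => _ ht [h1 h2] [h3 h4]; split; eauto. Qed.

Lemma rep_sim (G : zmodType) (le : G -> G -> Prop) (hqo : quasi_order le) x : sim le x (rep le x).
Proof. apply: epsilon_spec; exists x; split; apply hqo.1. Qed.

Lemma rep_eq (G : zmodType) (le : G -> G -> Prop) (hqo : quasi_order le) x y :
  sim le x y -> rep le x = rep le y.
Proof.
move=> hxy; rewrite /rep; congr epsilon; apply: functional_extensionality => z.
apply: propositional_extensionality; split => h.
  exact: sim_trans (sim_sym hxy) h.
exact: sim_trans hxy h.
Qed.

Definition cls (G : zmodType) (le : G -> G -> Prop) (hqo : quasi_order le)
  (htot : total_rel le) := {x : G | rep le x == x}.

HB.instance Definition _ G le hqo htot := Choice.on (@cls G le hqo htot).

Definition cle G le hqo htot (a b : @cls G le hqo htot) : bool := pb (le (val b) (val a)).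

Lemma cle_anti G le hqo htot : antisymmetric (@cle G le hqo htot).
Proof.
move=> [a ha] [b hb] /andP [/pbP h1 /pbP h2]; apply: val_inj => /=.
rewrite -(eqP ha) -(eqP hb); apply: rep_eq => //; split => //.
Qed.
Lemma cle_trans G le hqo htot : transitive (@cle G le hqo htot).
Proof.
move=> b a c /pbP h1 /pbP h2; apply/pbP; exact: hqo.2 h2 h1.
Qed.
Lemma cle_total G le hqo htot : total (@cle G le hqo htot).
Proof.
move=> a b; case: (htot (val a) (val b)) => h; apply/orP; [right|left]; exact/pbP.
Qed.

HB.instance Definition _ G le hqo htot :=
  Order.isOrder.Build (Order.Disp tt tt) (@cls G le hqo htot)
   (fun _ _ => erefl) (fun _ _ => erefl) (fun _ _ => erefl)
   (@cle_anti G le hqo htot) (@cle_trans G le hqo htot) (@cle_total G le hqo htot).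

Lemma clsE G le hqo htot (a b : @cls G le hqo htot) : (a <= b)%O = cle a b.
Proof. by []. Qed.

Lemma vle_refl d (Gam : orderType d) (a : option Gam) : vle a a.
Proof. by case: a => //= x; rewrite lexx. Qed.
Lemma vle_trans d (Gam : orderType d) (a b c : option Gam) : vle a b -> vle b c -> vle a c.
Proof. case: a; case: b; case: c => //= x y z; exact: le_trans. Qed.
Lemma vle_total d (Gam : orderType d) (a b : option Gam) : vle a b || vle b a.
Proof. case: a; case: b => //= x y; exact: le_total. Qed.
Lemma vle_anti d (Gam : orderType d) (a b : option Gam) : vle a b -> vle b a -> a = b.
Proof. case: a; case: b => //= x y h1 h2; by rewrite (@le_anti _ _ x y) // h1 h2. Qed.
Lemma vltW d (Gam : orderType d) (a b : option Gam) : vlt a b -> vle a b.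
Proof. rewrite /vlt; move/negPf=> h; move: (vle_total a b); by rewrite h orbF. Qed.
Lemma vlt_irr d (Gam : orderType d) (a : option Gam) : ~~ vlt a a.
Proof. by rewrite /vlt vle_refl. Qed.

Lemma ult_cases d (Gam : orderType d) (a b : option Gam) : a <> b -> vlt a b \/ vlt b a.
Proof.
move=> hab; case/orP: (vle_total a b) => h.
  left; apply/negP => h'; exact: hab (vle_anti h h').
right; apply/negP => h'; exact: hab (vle_anti h' h).
Qed.

Lemma val_min (G : zmodType) d (Gam : orderType d) (v : G -> option Gam) (hv : valuation v) c a b :
  vle c (v a) -> vle c (v b) -> vle c (v (a + b)).
Proof. move=> h1 h2; case/orP: (hv.2.1 a b) => h; [exact: vle_trans h1 h|exact: vle_trans h2 h]. Qed.

Lemma val_strict (G : zmodType) d (Gam : orderType d) (v : G -> option Gam) (hv : valuation v) a b :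
  vlt (v b) (v a) -> v (a + b) = v b.
Proof.
move=> hlt; apply: vle_anti; last first.
  by apply: val_min => //; [exact: vltW|exact: vle_refl].
case/orP: (hv.2.1 (a + b) (- a)); rewrite [a + b + - a]addrC addKr //.
by rewrite hv.2.2 => h; move: hlt; rewrite /vlt h.
Qed.

Lemma ult_sum (G : zmodType) d (Gam : orderType d) (v : G -> option Gam) (hv : valuation v) y z :
  v y <> v z -> (v (y + z) = v y /\ vle (v y) (v z)) \/ (v (y + z) = v z /\ vle (v z) (v y)).
Proof.
move=> hne; case: (ult_cases hne) => h.
  by left; split; [rewrite addrC; exact: val_strict| exact: vltW].
by right; split; [exact: val_strict| exact: vltW].
Qed.

Lemma back (G : zmodType) (le : G -> G -> Prop)
  (hqo : quasi_order le) (htot : total_rel le) (H : G -> Prop)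
  (hsub : is_subgroup H) (hinit : initial_segment le H) (hord : ordered_on le H)
  d (Gam : orderType d) (v : G -> option Gam) (hv : valuation v)
  (hHv : forall h g, H h -> ~ H g -> vlt (v g) (v h))
  (hcmp : forall g h, ~ H g -> ~ H h -> (le g h <-> vle (v h) (v g))) :
  Q1 le /\ Q2 le.
Proof.
have Hopp x : H x -> H (- x).
  by move=> hx; rewrite -sub0r; apply: hsub.2 => //; exact: hsub.1.
have Hadd x y : H x -> H y -> H (x + y).
  by move=> hx hy; rewrite -[y]opprK; apply: hsub.2 => //; exact: Hopp.
have Hbelow a b : H a -> ~ H b -> le a b.
  move=> ha hb; case: (htot a b) => // h; by case: hb; exact: hinit h.
have Hsum1 x z : H x -> ~ H z -> ~ H (x + z).
  move=> hx hz hxz; apply: hz; rewrite -(addKr x z); exact: Hadd (Hopp _ hx) hxz.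
have Hsum2 y z : ~ H y -> ~ H z -> v y <> v z -> ~ H (y + z).
  move=> hy hz hne hyz; have h1 := hHv _ _ hyz hy; have h2 := hHv _ _ hyz hz.
  case: (ult_sum hv hne) => [[e _]|[e _]]; rewrite e in h1 h2.
    by move: h1; rewrite (negPf (vlt_irr _)).
  by move: h2; rewrite (negPf (vlt_irr _)).
have vsim y z : ~ H y -> ~ H z -> v y = v z -> sim le y z.
  move=> hy hz e; split; apply/(hcmp _ _ _ _) => //; rewrite e; exact: vle_refl.
split.
  move=> x [h1 h2]; have hx : H x by exact: hinit hsub.1 h1.
  exact: hord.1 hx hsub.1 h1 h2.
move=> x y z hxy hnyz.
case: (classic (H y)) => hy.
  have hx : H x := hinit _ _ hy hxy.
  case: (classic (H z)) => hz; first exact: hord.2.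
  apply/hcmp; [exact: Hsum1|exact: Hsum1|].
  rewrite (val_strict hv (hHv _ _ hx hz)) (val_strict hv (hHv _ _ hy hz)); exact: vle_refl.
have hne : ~ H z -> v y <> v z by move=> hz e; exact: hnyz (vsim _ _ hy hz e).
case: (classic (H x)) => hx.
  case: (classic (H z)) => hz.
    apply: Hbelow; [exact: Hadd|by rewrite addrC; exact: Hsum1].
  apply/hcmp; [exact: Hsum1|exact: (Hsum2 _ _ hy hz (hne hz))|].
  rewrite (val_strict hv (hHv _ _ hx hz)).
  case: (ult_sum hv (hne hz)) => [[-> h]|[-> _]] //; exact: vle_refl.
have vyx : vle (v y) (v x) by apply/hcmp.
case: (classic (H z)) => hz.
  apply/hcmp; [by rewrite addrC; exact: Hsum1|by rewrite addrC; exact: Hsum1|].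
  rewrite [x + z]addrC [y + z]addrC (val_strict hv (hHv _ _ hz hx)) (val_strict hv (hHv _ _ hz hy)) //.
case: (classic (H (x + z))) => hxz; first by apply: Hbelow => //; exact: (Hsum2 _ _ hy hz (hne hz)).
apply/hcmp => //; first exact: (Hsum2 _ _ hy hz (hne hz)).
case: (ult_sum hv (hne hz)) => [[-> h]|[-> h]]; apply: val_min => //.
all: first [exact: vyx|exact: h|exact: (vle_trans h vyx)|exact: vle_refl].
Qed.

Definition Hs (G : zmodType) (le : G -> G -> Prop) (x : G) := le x 0 \/ le (- x) 0.

Lemma fwd (G : zmodType) (le : G -> G -> Prop)
  (hqo : quasi_order le) (htot : total_rel le) (q1 : Q1 le) (q2 : Q2 le) :
  [/\ forall x y, Hs le x -> Hs le y -> Hs le (x + y),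
      forall x, Hs le x -> Hs le (- x),
      forall s a, Hs le s -> le a s -> Hs le a,
      forall x y, Hs le x -> Hs le y -> le x y -> le y x -> x = y &
  [/\ forall x y z, Hs le x -> Hs le y -> Hs le z -> le x y -> le (x + z) (y + z),
      forall g, ~ Hs le g -> sim le g (- g),
      forall g, ~ Hs le g -> le 0 g /\ ~ le g 0,
      forall g h, ~ Hs le g -> Hs le h -> le (g + h) g &
      forall g h, ~ Hs le g -> ~ Hs le h -> ~ Hs le (g + h) -> le g h -> le (g + h) h]].
Proof.
have refl x : le x x := hqo.1 x.
have trans x y z : le x y -> le y z -> le x z := hqo.2 x y z.
have ns0 x : x != 0 -> ~ sim le 0 x.
  by move=> /eqP hx [h1 h2]; apply: hx; apply: q1.
have Lneg x : le x 0 -> le 0 (- x).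
  move=> hx; have [->|hx0] := eqVneq x 0; first by rewrite oppr0.
  have := q2 _ _ _ hx (ns0 (- x) _); rewrite subrr add0r; apply; by rewrite oppr_eq0.
have Hnsim y : Hs le y -> y != 0 -> ~ sim le y (- y).
  move=> [hy|hy] hy0 [h1 h2].
    have e : - y = 0 by apply: q1; split; [exact: trans h2 hy|exact: Lneg].
    by move: hy0; rewrite -oppr_eq0 e eqxx.
  have e : y = 0 by apply: q1; split; [exact: trans h1 hy|rewrite -[y]opprK; exact: Lneg].
  by move: hy0; rewrite e eqxx.
have Nadd x y : le x 0 -> le y 0 -> le (x + y) 0.
  move=> hx hy; have [->|hy0] := eqVneq y 0; first by rewrite addr0.
  by apply: trans hy; have := q2 _ _ _ hx (ns0 _ hy0); rewrite add0r.
have Hopp x : Hs le x -> Hs le (- x).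
  by rewrite /Hs opprK => -[h|h]; [right|left].
have mixed x y : le x 0 -> le (- y) 0 -> Hs le (x + y).
  move=> hx hy; have [->|hx0] := eqVneq x 0; first by rewrite add0r; right.
  have [->|hy0] := eqVneq y 0; first by rewrite addr0; left.
  case: (htot y (- x)) => h.
    have hs : ~ sim le (- x) x.
      have := Hnsim (- x) (Hopp _ (or_introl hx)); rewrite opprK; apply; by rewrite oppr_eq0.
    by left; have := q2 _ _ _ h hs; rewrite addNr addrC.
  have hs : ~ sim le y (- y) by apply: Hnsim => //; right.
  by right; have := q2 _ _ _ h hs; rewrite subrr opprD addrC.
have Hadd x y : Hs le x -> Hs le y -> Hs le (x + y).
  move=> [hx|hx] [hy|hy].
  - by left; apply: Nadd.
  - exact: mixed.
  - by rewrite addrC; apply: mixed.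
  - by right; rewrite opprD; apply: Nadd.
have Hinit s a : Hs le s -> le a s -> Hs le a.
  move=> hs ha; case: (classic (le s 0)) => hs0; first by left; exact: trans ha hs0.
  have hs' : le (- s) 0 by case: hs.
  have hn : ~ sim le s (- s) by move=> [h1 _]; apply: hs0; exact: trans h1 hs'.
  have h := q2 _ _ _ ha hn; rewrite subrr in h.
  by rewrite -(subrK s a); apply: Hadd => //; left.
have Hanti x y : Hs le x -> Hs le y -> le x y -> le y x -> x = y.
  move=> hx hy h1 h2; have [e|hy0] := eqVneq y 0.
    by rewrite e in h1 h2 *; apply: q1.
  have hn := Hnsim y hy hy0.
  have hn' : ~ sim le x (- y).
    move=> [h3 h4]; apply: hn; split; [exact: trans h2 h3|exact: trans h4 h1].
  have k1 := q2 _ _ _ h1 hn; have k2 := q2 _ _ _ h2 hn'; rewrite subrr in k1 k2.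
  by apply/eqP; rewrite -subr_eq0; apply/eqP; apply: q1.
have Htr x y z : Hs le x -> Hs le y -> Hs le z -> le x y -> le (x + z) (y + z).
  move=> hx hy hz hxy; case: (classic (sim le y z)) => hyz; last exact: q2.
  have e : y = z by apply: Hanti => //; case: hyz.
  subst z; have [e|hy0] := eqVneq y 0; first by rewrite e !addr0 -e.
  case: (classic (le y x)) => hyx.
    by rewrite (Hanti x y) //.
  apply: NNPP => hn.
  have hle : le (y + y) (x + y) by case: (htot (x + y) (y + y)).
  have hns := Hnsim y hy hy0.
  case: (classic (sim le (x + y) (- y))) => hs; last first.
    by apply: hyx; have := q2 _ _ _ hle hs; rewrite !addrK; exact: id.
  have e : x + y = - y by apply: Hanti => //; [exact: Hadd|exact: Hopp|case: hs|case: hs].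
  have ex : x = - (y + y) by rewrite -(addrK y x) e opprD.
  rewrite e in hle hn.
  have hns' : ~ sim le (- y) y by move=> [a b]; apply: hns.
  have k1 := q2 _ _ _ hle hns'; rewrite addNr in k1.
  have k2 := q2 _ _ _ hxy hns; rewrite subrr ex -opprD in k2.
  have e3 : y + y + y = 0 by apply: q1; split => //; rewrite -[_ + y]opprK; exact: Lneg.
  move/eqP: e3; rewrite addr_eq0 => /eqP e3.
  by apply: hn; rewrite e3; apply: refl.
have F5 g : ~ Hs le g -> sim le g (- g).
  move=> hg; apply: NNPP => hn.
  have h0 : le 0 g by case: (htot g 0) => // h; case: hg; left.
  by apply: hg; right; have := q2 _ _ _ h0 hn; rewrite subrr sub0r.
have Fpos g : ~ Hs le g -> le 0 g /\ ~ le g 0.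
  move=> hg; have hg0 : ~ le g 0 by move=> h; apply: hg; left.
  by split => //; case: (htot g 0).
have F6 g h : ~ Hs le g -> Hs le h -> le (g + h) g.
  move=> hg hh; have hg0 : g != 0 by apply/eqP => e; apply: hg; rewrite e; left; apply: refl.
  case: hh => hh.
    have := q2 _ _ _ hh (ns0 _ hg0); rewrite add0r addrC; exact: id.
  have hgh : ~ Hs le (g + h).
    by move=> k; apply: hg; rewrite -(addrK h g); apply: Hadd => //; left.
  have [s1 _] := F5 _ hgh.
  have hng0 : - g != 0 by rewrite oppr_eq0.
  have k := q2 _ _ _ hh (ns0 _ hng0); rewrite add0r addrC -opprD in k.
  have [_ s2] := F5 _ hg.
  exact: trans s1 (trans _ _ _ k s2).
have F7 g h : ~ Hs le g -> ~ Hs le h -> ~ Hs le (g + h) -> le g h -> le (g + h) h.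
  move=> hg hh hgh hgh'; apply: NNPP => hn.
  have hle : le h (g + h) by case: (htot (g + h) h).
  have [s1 s2] := F5 _ hgh.
  have hn' : ~ sim le (- (g + h)) h by move=> [a _]; apply: hn; exact: trans s1 a.
  have k := q2 _ _ _ (trans _ _ _ hgh' (trans _ _ _ hle s1)) hn'.
  rewrite opprD addrNK in k.
  have [_ s3] := F5 _ hg.
  by apply: hn; exact: trans k (trans _ _ _ s3 hgh').
by split.
Qed.

Lemma rep_idem (G : zmodType) (le : G -> G -> Prop) (hqo : quasi_order le) x :
  rep le (rep le x) == rep le x.
Proof. by apply/eqP; symmetry; apply: rep_eq => //; exact: rep_sim. Qed.

Definition mk (G : zmodType) (le : G -> G -> Prop) (hqo : quasi_order le) (htot : total_rel le) (x : G) : @cls G le hqo htot :=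
  exist _ (rep le x) (rep_idem hqo x).

Definition vv (G : zmodType) (le : G -> G -> Prop) (hqo : quasi_order le) (htot : total_rel le) (x : G) : option (@cls G le hqo htot) :=
  if x == 0 then None else if pb (Hs le x) then Some (mk hqo htot 0) else Some (mk hqo htot x).

Lemma mk_le (G : zmodType) (le : G -> G -> Prop) (hqo : quasi_order le) (htot : total_rel le) (a b : G) : (mk hqo htot a <= mk hqo htot b)%O <-> le b a.
Proof.
rewrite clsE /cle /=; have [s1 s2] := rep_sim hqo a; have [s3 s4] := rep_sim hqo b.
split => [/pbP h|h]; last apply/pbP.
  exact: hqo.2 _ _ _ s3 (hqo.2 _ _ _ h s2).
exact: hqo.2 _ _ _ s4 (hqo.2 _ _ _ h s1).
Qed.

Lemma mk_eq (G : zmodType) (le : G -> G -> Prop) (hqo : quasi_order le) (htot : total_rel le) (a b : G) : sim le a b -> mk hqo htot a = mk hqo htot b.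
Proof. by move=> h; apply: val_inj => /=; apply: rep_eq. Qed.

Theorem mainTheorem1 (G : zmodType) (le : G -> G -> Prop)
  (hqo : quasi_order le) (htot : total_rel le) :
  (Q1 le /\ Q2 le) <->
  exists H : G -> Prop,
    is_subgroup H /\
    initial_segment le H /\
    ordered_on le H /\
    exists (d : Order.disp_t) (Gam : orderType d) (v : G -> option Gam),
      valuation v /\
      (forall h g, H h -> ~ H g -> vlt (v g) (v h)) /\
      (forall g h, ~ H g -> ~ H h -> (le g h <-> vle (v h) (v g))).
Proof.
split; last first.
  move=> [H [hsub [hinit [hord [d [Gam [v [hv [hHv hcmp]]]]]]]]].
  exact: (@back G le hqo htot H hsub hinit hord d Gam v hv hHv hcmp).
move=> [q1 q2]; have [Fadd Fopp Finit Fanti [Ftr F5 Fpos F6 F7]] := fwd hqo htot q1 q2.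
have H0 : Hs le 0 by left; exact: hqo.1.
exists (Hs le); split.
  by split => // x y hx hy; apply: Fadd => //; apply: Fopp.
split; first by move=> s a; exact: Finit.
split; first by split.
exists (Order.Disp tt tt), (@cls G le hqo htot), (vv hqo htot).
have vH x : x != 0 -> Hs le x -> vv hqo htot x = Some (mk hqo htot 0).
  by move=> /negPf h hx; rewrite /vv h; case: pbP.
have vN x : ~ Hs le x -> vv hqo htot x = Some (mk hqo htot x).
  move=> hx; have h : x == 0 = false by apply/negbTE/eqP => e; apply: hx; rewrite e.
  by rewrite /vv h; case: pbP.
have nz x : ~ Hs le x -> x != 0 by move=> hx; apply/eqP => e; apply: hx; rewrite e.
split; [split; [|split]|split].
- move=> g; rewrite /vv; split; last by move=> ->; rewrite eqxx.
  by case: eqP => // _; case: pbP.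
- move=> g h.
  have [e|ne] := eqVneq (g + h) 0.
    rewrite e (_ : vv hqo htot 0 = None); last by rewrite /vv eqxx.
    by case: (vv hqo htot g).
  have [eg|ng] := eqVneq g 0; first by rewrite eg add0r vle_refl orbT.
  have [eh|nh] := eqVneq h 0; first by rewrite eh addr0 vle_refl.
  case: (classic (Hs le (g + h))) => hgh.
    rewrite (vH _ ne hgh); case: (classic (Hs le g)) => hg.
      by rewrite (vH _ ng hg) /= lexx.
    by rewrite (vN _ hg) /=; apply/orP; left; apply/mk_le; have [] := Fpos _ hg.
  rewrite (vN _ hgh); case: (classic (Hs le g)) => hg; case: (classic (Hs le h)) => hh.
  + by case: hgh; exact: Fadd.
  + by rewrite (vN _ hh) /=; apply/orP; right; apply/mk_le; rewrite addrC; exact: F6.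
  + by rewrite (vN _ hg) /=; apply/orP; left; apply/mk_le; exact: F6.
  + rewrite (vN _ hg) (vN _ hh) /=; case: (htot g h) => k; apply/orP.
      by right; apply/mk_le; exact: F7.
    by left; apply/mk_le; rewrite addrC; apply: F7 => //; rewrite addrC.
- move=> g; rewrite /vv oppr_eq0; case: eqP => // _.
  case: (classic (Hs le g)) => hg.
    by have hg' := Fopp _ hg; do 2 case: pbP => //.
  have hg' : ~ Hs le (- g) by move=> k; apply: hg; rewrite -[g]opprK; exact: Fopp.
  case: pbP => // _; case: pbP => // _; congr Some; apply: mk_eq; have [a b] := F5 _ hg; by split.
- move=> h g hh hg; rewrite (vN _ hg).
  have [e|ne] := eqVneq h 0; first by rewrite e /vv eqxx.
  rewrite (vH _ ne hh) /vlt /=; apply/negP => /mk_le k.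
  by have [] := Fpos _ hg.
- move=> g h hg hh; rewrite (vN _ hg) (vN _ hh) /=; split => k; first exact/mk_le.
  exact/mk_le.
Qed.
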